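(* Let $n\ge 2$, let $a_1,\dots,a_n$ be positive integers, and let $s=[2a_1,-2a_2,2a_3,\dots,(-1)^{n-1}2a_n]$ and $s'=[2a_1,-2a_2,\dots,(-1)^{n-2}2a_{n-1}]$. Then $\Delta_{K(s)}(t)$ and $\Delta_{K(s')}(t)$ have only real zeros, the product $\Delta_{K(s)}(t)\Delta_{K(s')}(t)$ has no repeated zeros, and the zeros of $\Delta_{K(s)}(t)$ and $\Delta_{K(s')}(t)$ are interlaced.
   Context: For a finite sequence $r=[2a_1,2a_2,\dots,2a_n]$ of nonzero even integers, $K(r)$ denotes the 2-bridge knot or link whose associated rational number has the even continued fraction expansion $1/(2a_1-1/(2a_2-\cdots-1/(2a_n)))$. Let $M(r)$ be the $n\times n$ integer matrix whose $(k,k)$-entry is $a_k$, whose $(k,k+1)$-entry is $1$ ($1\le k\le n-1$), and whose other entries are $0$; $\Delta_{K(r)}(t)=\det(tM(r)-M(r)^T)$ is the (reduced) Alexander polynomial of $K(r)$ (up to sign). Interlacing: two real-rooted polynomials with zeros $\alpha_1\le\dots\le\alpha_n$ and $\beta_1\le\dots\le\beta_m$ (with multiplicity) are interlaced if $|m-n|\le1$ and the zeros alternate: if $n=m$, either $\alpha_1\le\beta_1\le\alpha_2\le\dots\le\alpha_n\le\beta_n$ or $\beta_1\le\alpha_1\le\dots\le\beta_n\le\alpha_n$; if $n=m+1$, $\alpha_1\le\beta_1\le\alpha_2\le\dots\le\beta_m\le\alpha_{m+1}$; if $m=n+1$, $\beta_1\le\alpha_1\le\beta_2\le\dots\le\alpha_n\le\beta_{n+1}$.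 *)

(* Defs.v *)
From HB Require Import structures.
From mathcomp Require Import all_boot all_order all_algebra all_field.
Set Implicit Arguments. Unset Strict Implicit. Unset Printing Implicit Defensive.
Import Order.TTheory GRing.Theory Num.Theory.
Local Open Scope ring_scope.

(* For r = [2a_1,...,2a_n] (a seq of even ints), M(r) is the n x n integer
   matrix with (k,k)-entry a_k = r_k / 2, (k,k+1)-entry 1, other entries 0. *)
Definition Mmat (r : seq int) : 'M[int]_(size r) :=
  \matrix_(i, j) (if i == j then (r`_i %/ 2)%Z
                  else if (j == i.+1 :> nat) then 1 else 0).

Definition alexander (r : seq int) : {poly int} :=
  \det ('X *: map_mx polyC (Mmat r) - (map_mx polyC (Mmat r))^T).

Definition alexC (r : seq int) : {poly algC} :=
  map_poly (fun z : int => z%:~R) (alexander r).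

Definition only_real_zeros (p : {poly algC}) : Prop :=
  forall z : algC, root p z -> z \is Num.real.

Definition no_repeated_zeros (p : {poly algC}) : Prop :=
  forall z : algC, root p z -> mup z p = 1%N.

Definition sorted_zeros (p : {poly algC}) (rs : seq algC) : Prop :=
  all (fun x => x \is Num.real) rs /\ sorted <=%R rs /\
  p = lead_coef p *: \prod_(x <- rs) ('X - x%:P).

Definition interlaced_seq (al be : seq algC) : Prop :=
  let n := size al in let m := size be in
  (n = m /\
     ((forall i, (i < n)%N -> al`_i <= be`_i) /\
      (forall i, (i.+1 < n)%N -> be`_i <= al`_i.+1)
    \/ (forall i, (i < n)%N -> be`_i <= al`_i) /\
      (forall i, (i.+1 < n)%N -> al`_i <= be`_i.+1)))
  \/ (n = m.+1 /\ forall i, (i < m)%N -> al`_i <= be`_i /\ be`_i <= al`_i.+1)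
  \/ (m = n.+1 /\ forall i, (i < n)%N -> be`_i <= al`_i /\ al`_i <= be`_i.+1).

Definition interlaced (p q : {poly algC}) : Prop :=
  exists al be, sorted_zeros p al /\ sorted_zeros q be /\ interlaced_seq al be.

Definition alt_seq (a : seq int) (k : nat) : seq int :=
  mkseq (fun i => (-1) ^+ i * 2 * a`_i) k.

(* Main.v *)
Require Import Defs.
From HB Require Import structures.
From mathcomp Require Import all_boot all_order all_algebra all_field.
From mathcomp Require Import zify polyrcf.
From mathcomp Require Import ring lra.
Import Order.TTheory GRing.Theory Num.Theory.
Local Open Scope ring_scope.
Set Implicit Arguments. Unset Strict Implicit. Unset Printing Implicit Defensive.

Section Det.
Variable R : comNzRingType.
Implicit Type f : nat -> R.

Definition tri_e f (i j : nat) : {poly R} :=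
  if i == j then ('X - 1) * (f i)%:P
  else if j == i.+1 then 'X else if i == j.+1 then -1 else 0.

Definition tri k f : 'M[{poly R}]_k := \matrix_(i < k, j < k) tri_e f i j.

Fixpoint D2 f k : {poly R} * {poly R} :=
  match k with
  | 0 => (1, ('X - 1) * (f 0%N)%:P)
  | k'.+1 => let: (u, v) := D2 f k' in (v, ('X - 1) * (f k)%:P * v + 'X * u)
  end.
Definition D f k := (D2 f k).1.

Lemma D0 f : D f 0 = 1. Proof. by []. Qed.
Lemma D1 f : D f 1 = ('X - 1) * (f 0%N)%:P. Proof. by []. Qed.
Lemma D2E f k : D2 f k = (D f k, D f k.+1).
Proof.
elim: k => [|k IH] //=; rewrite /D /=.
by case: (D2 f k) IH => u v [_ ->] /=.
Qed.
Lemma DSS f k : D f k.+2 = ('X - 1) * (f k.+1)%:P * D f k.+1 + 'X * D f k.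
Proof. by rewrite {1}/D /= D2E. Qed.

Lemma bump_lt h i : (i < h)%N -> bump h i = i.
Proof. by move=> hi; rewrite /bump leqNgt hi. Qed.

Lemma bump_ge h i : (h <= i)%N -> bump h i = i.+1.
Proof. by move=> hi; rewrite /bump hi. Qed.

Lemma det_tri_rec k f : \det (tri k.+2 f) =
  ('X - 1) * (f k.+1)%:P * \det (tri k.+1 f) + 'X * \det (tri k f).
Proof.
rewrite (expand_det_row _ ord_max) big_ord_recr /= big_ord_recr /=.
rewrite big1 ?add0r; last first.
  move=> j _; rewrite mxE /tri_e /=.
  have hj := ltn_ord j.
  rewrite ifF; last by apply/eqP => /= E; lia.
  rewrite ifF; last by apply/eqP => /= E; lia.
  rewrite ifF ?mul0r //; apply/eqP => /= E; lia.
rewrite addrC; congr (_ + _).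
  rewrite mxE /tri_e /= eqxx /cofactor /= -signr_odd oddD addbb expr0 mul1r.
  congr (_ * \det _); apply/matrixP => i j; rewrite !mxE /=.
  by rewrite !bump_lt.
rewrite mxE /tri_e /= ifF; last by apply/eqP => /= E; lia.
rewrite ifF; last by apply/eqP => /= E; lia.
rewrite eqxx /cofactor /= -signr_odd oddD /= addNb addbb expr1.
rewrite mulrA mulN1r opprK mul1r.
rewrite (expand_det_col _ ord_max) big_ord_recr /= big1 ?add0r; last first.
  move=> i _; have hi := ltn_ord i.
  rewrite !mxE /tri_e /= (@bump_ge k k) // (@bump_lt k.+1 i); last by lia.
  rewrite ifF; last by apply/eqP => /= E; lia.
  rewrite ifF; last by apply/eqP => /= E; lia.
  rewrite ifF ?mul0r //; apply/eqP => /= E; lia.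
rewrite !mxE /tri_e /= (@bump_lt k.+1 k) ?(@bump_ge k k) //.
rewrite ifF; last by apply/eqP => /= E; lia.
rewrite eqxx /cofactor /= -signr_odd oddD addbb expr0 mul1r.
congr (_ * \det _); apply/matrixP => i j; rewrite !mxE /=.
have hi := ltn_ord i; have hj := ltn_ord j.
by rewrite !(@bump_lt k) // !(@bump_lt k.+1) //; lia.
Qed.

Lemma det_tri k f : \det (tri k f) = D f k.
Proof.
suff : \det (tri k f) = D f k /\ \det (tri k.+1 f) = D f k.+1 by case.
elim: k => [|k [IH1 IH2]].
  split; first by rewrite det_mx00.
  by rewrite det_mx11 mxE /tri_e /= D1.
by split => //; rewrite det_tri_rec DSS IH1 IH2.
Qed.

End Det.
Lemma alex_tri r : alexander r = \det (tri (size r) (fun i => (r`_i %/ 2)%Z)).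
Proof.
rewrite /alexander; congr (\det _); apply/matrixP => i j.
rewrite !mxE /tri_e.
have [<-|nij] := eqVneq i j.
  by rewrite !eqxx mulrBl mul1r mulrC mul_polyC.
have nij' : (val i == val j) = false by apply/negbTE.
rewrite nij'.
have [ej|nj] := eqVneq (val j) (val i).+1.
  move: ej => /= ej; rewrite ifF; last by apply/eqP => /= E; lia.
  by rewrite mulr1 subr0.
by case: eqP => E //=; rewrite mulr0 sub0r // oppr0.
Qed.

Definition gsgn (a : seq int) (i : nat) : int := (-1) ^+ i * a`_i.

Lemma alex_alt a k : alexander (alt_seq a k) = D (gsgn a) k.
Proof.
rewrite alex_tri size_mkseq -det_tri; congr (\det _); apply/matrixP => i j.
rewrite !mxE /tri_e; case: eqP => // _.
by rewrite nth_mkseq // -mulrA [2 * _]mulrC mulrA mulzK.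
Qed.

Section Real.
Variable R : rcfType.
Variable b : nat -> R.
Variable N : nat.
Hypothesis bpos : forall i, (i < N)%N -> 0 < b i.

Fixpoint P2 k : {poly R} * {poly R} :=
  match k with
  | 0 => (1, ('X - 1) * (b 0%N)%:P)
  | k'.+1 => let: (u, v) := P2 k' in (v, ('X - 1) * (b k)%:P * v - 'X * u)
  end.
Definition P k := (P2 k).1.

Lemma P0 : P 0 = 1. Proof. by []. Qed.
Lemma P1 : P 1 = ('X - 1) * (b 0%N)%:P. Proof. by []. Qed.
Lemma P2E k : P2 k = (P k, P k.+1).
Proof.
elim: k => [|k IH] //=; rewrite /P /=.
by case: (P2 k) IH => u v [_ ->] /=.
Qed.
Lemma PSS k : P k.+2 = ('X - 1) * (b k.+1)%:P * P k.+1 - 'X * P k.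
Proof. by rewrite {1}/P /= P2E. Qed.

Lemma P_rec0 k : (P k.+1).[0] = - b k * (P k).[0].
Proof.
case: k => [|k]; first by rewrite P1 P0 !hornerE; ring.
by rewrite PSS !hornerE; ring.
Qed.

Lemma P_at0 k : (k <= N)%N -> 0 < (-1) ^+ k * (P k).[0].
Proof.
elim: k => [|k IH] hk; first by rewrite P0 hornerC mulr1 ltr01.
rewrite P_rec0.
have -> : (-1)^+k.+1 * (- b k * (P k).[0]) = b k * ((-1)^+k * (P k).[0])
  by rewrite exprS; ring.
by apply: mulr_gt0; [apply: bpos | apply: IH; lia].
Qed.

Lemma P_size_lc k : (k <= N)%N -> size (P k) = k.+1 /\ 0 < lead_coef (P k).
Proof.
suff H : forall k, ((k <= N)%N -> size (P k) = k.+1 /\ 0 < lead_coef (P k)) /\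
  ((k.+1 <= N)%N -> size (P k.+1) = k.+2 /\ 0 < lead_coef (P k.+1)) by case: (H k).
have sA c (p : {poly R}) : c != 0 -> p != 0 ->
   size (('X - 1) * c%:P * p) = (size p).+1 /\
   lead_coef (('X - 1) * c%:P * p) = c * lead_coef p.
  move=> c0 p0; rewrite -polyC1 mulrC mulrA; split.
    rewrite size_mul ?mulf_neq0 ?polyC_eq0 ?polyXsubC_eq0 //.
    rewrite size_mul ?polyC_eq0 ?size_polyC ?c0 ?size_XsubC ?polyXsubC_eq0 //=.
    by rewrite addnS addnS /= addn0 addn1.
  by rewrite !lead_coefM lead_coefC lead_coefXsubC mulr1 mulrC.
clear k; elim=> [|k [IH1 IH2]].
  split; first by rewrite P0 size_polyC lead_coefC oner_neq0 ltr01.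
  move=> h; have b0 : b 0%N != 0 by rewrite gt_eqF // bpos.
  have [s l] := sA (b 0%N) 1 b0 (oner_neq0 _).
  by rewrite P1 -[_ * _%:P]mulr1 s l size_polyC oner_neq0 lead_coef1 mulr1 bpos.
split => // h.
have bk : b k.+1 != 0 by rewrite gt_eqF // bpos.
have [s1 l1] := IH2 (ltnW h).
have [s0 l0] := IH1 (ltnW (ltnW h)).
have p1 : P k.+1 != 0 by rewrite -size_poly_eq0 s1.
have p0 : P k != 0 by rewrite -size_poly_eq0 s0.
have [sa la] := sA _ _ bk p1.
have sb : size (- ('X * P k)) = k.+2 by rewrite size_polyN mulrC size_mulX // s0.
rewrite PSS; split.
  by rewrite size_addl sa s1 // sb.
by rewrite lead_coefDl ?la ?mulr_gt0 ?bpos // sa s1 sb.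
Qed.


Definition incr (r : nat -> R) k := forall i, (i.+1 < k)%N -> r i < r i.+1.

Lemma incr_lt r k : incr r k -> forall i j, (i < j)%N -> (j < k)%N -> r i < r j.
Proof.
move=> hr i; elim=> [|j IH] //= hij hjk.
have [ij|ij] := eqVneq i j.
  by rewrite ij; apply: hr.
apply: lt_trans (IH _ _) (hr _ hjk); lia.
Qed.

Lemma incr_le r k : incr r k -> forall i j, (i <= j)%N -> (j < k)%N -> r i <= r j.
Proof.
move=> hr i j; rewrite leq_eqVlt => /orP [/eqP -> //|hij] hjk.
exact/ltW/(incr_lt hr).
Qed.

Definition prodX (r : nat -> R) k := \prod_(0 <= i < k) ('X - (r i)%:P).

Lemma prod_pos (r : nat -> R) x m : (forall j, (j < m)%N -> r j < x) ->
  0 < \prod_(0 <= j < m) (x - r j).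
Proof.
elim: m => [|m IH] h; first by rewrite big_geq // ltr01.
rewrite big_nat_recr //= mulr_gt0 ?IH ?subr_gt0 ?h //.
by move=> j hj; apply: h; lia.
Qed.

Lemma sign_prod (r : nat -> R) x k i : (i <= k)%N ->
  (forall j, (j < i)%N -> r j < x) -> (forall j, (i <= j)%N -> (j < k)%N -> x < r j) ->
  0 < (-1) ^+ (k - i) * (prodX r k).[x].
Proof.
move=> hik hl hr; rewrite /prodX horner_prod.
under eq_bigr do rewrite hornerXsubC.
elim: k hik hr => [|k IH] hik hr.
  by rewrite big_geq // mulr1; move: hik; rewrite leqn0 => /eqP ->; rewrite expr0 ltr01.
have [ik|ik] := leqP i k.
  rewrite big_nat_recr //= subSn // exprS.
  have h1 := IH ik (fun j a b => hr j a (ltnW b)).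
  have h2 : x < r k by apply: hr.
  set s := (-1) ^+ (k - i) in h1 *; set p := \prod_(_ <= _ < _) _ in h1 *.
  have -> : -1 * s * (p * (x - r k)) = (s * p) * (r k - x) by ring.
  by rewrite mulr_gt0 // subr_gt0.
have ik' : i = k.+1 by lia.
by subst i; rewrite subnn expr0 mul1r; apply: prod_pos.
Qed.

Definition Inv k (r : nat -> R) :=
  [/\ incr r k, (0 < k)%N -> 0 < r 0%N, P k = lead_coef (P k) *: prodX r k &
      forall i, (i < k)%N -> 0 < (-1) ^+ (k.-1 - i) * (P k.-1).[r i]].

Lemma Inv0 : Inv 0 (fun _ => 0).
Proof.
split => //; rewrite P0 lead_coef1 scale1r /prodX big_geq //.
Qed.

Lemma P_rec k : (1 <= k)%N -> P k.+1 = ('X - 1) * (b k)%:P * P k - 'X * P k.-1.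
Proof. by case: k => // k _; rewrite PSS. Qed.

Lemma sgn_sq m : (-1) ^+ m * (-1) ^+ m = 1 :> R.
Proof. by rewrite -exprD addnn -signr_odd odd_double. Qed.


Lemma prodX_root r k i : (i < k)%N -> (prodX r k).[r i] = 0.
Proof.
move=> hi; rewrite /prodX horner_prod (big_cat_nat _ (n:=i)) //= ?(ltnW hi) //.
by rewrite (big_ltn hi) hornerXsubC subrr mul0r mulr0.
Qed.

Lemma step k r : (k < N)%N -> Inv k r ->
  exists t, Inv k.+1 t /\ (forall i, (i < k)%N -> t i < r i /\ r i < t i.+1).
Proof.
move=> hkN [hinc hr0 hfac hsgn].
set Q := P k.+1.
have [sQ lcQ] := P_size_lc hkN.
have [_ lcP] := P_size_lc (ltnW hkN).
have [M0 HM0] := poly_pinfty_gt_lc lcQ.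
pose M := Num.max M0 (1 + `|r k.-1|).
have hM : forall x, M <= x -> 0 < Q.[x].
  move=> x hx; apply: lt_le_trans lcQ (HM0 _ _); apply: le_trans hx.
  by rewrite le_max lexx.
have rM : r k.-1 < M.
  apply: (@lt_le_trans _ _ (1 + `|r k.-1|)); last by rewrite le_max lexx orbT.
  by apply: le_lt_trans (ler_norm _) _; rewrite ltrDr ltr01.
have M0lt : 0 < M.
  apply: (@lt_le_trans _ _ (1 + `|r k.-1|)); last by rewrite le_max lexx orbT.
  by rewrite ltr_pwDl ?ltr01.
have rpos : forall i, (i < k)%N -> 0 < r i.
  move=> i hi; apply: lt_le_trans (hr0 _) (incr_le hinc _ hi) => //; lia.
pose e i := if i == 0%N then 0 else if (i <= k)%N then r i.-1 else M.
have e0 : e 0%N = 0 by [].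
have eS : forall i, (i < k)%N -> e i.+1 = r i by move=> i hi; rewrite /e /= hi.
have eM : e k.+1 = M by rewrite /e /= ltnn.
have E1 : forall i, (i <= k)%N -> e i < e i.+1.
  case=> [|i] hi.
    rewrite e0; case: (posnP k) => hk.
      by move: eM; rewrite hk => ->.
    by rewrite eS // hr0.
  rewrite eS //; case: (ltnP i.+1 k) => h.
    by rewrite eS // hinc.
  have -> : i.+1 = k by lia.
  by rewrite eM; have -> : i = k.-1 by lia.
have E2 : forall i, (i <= k.+1)%N -> 0 < (-1) ^+ (k.+1 - i) * Q.[e i].
  case=> [|i] hi.
    by rewrite e0 subn0; apply: P_at0.
  case: (ltnP i k) => h.
    rewrite eS // subSS /Q (P_rec (k:=k)); last by lia.
    have Pr : (P k).[r i] = 0 by rewrite hfac hornerZ prodX_root // mulr0.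
    rewrite hornerD hornerN !hornerM Pr mulr0 sub0r hornerX.
    have -> : (k - i)%N = (k.-1 - i).+1 by lia.
    have hs := hsgn i h.
    set s := (-1) ^+ (k.-1 - i) in hs *.
    have -> : (-1) ^+ (k.-1 - i).+1 * - (r i * (P k.-1).[r i]) =
      r i * (s * (P k.-1).[r i]) by rewrite exprS /s; ring.
    by rewrite mulr_gt0 // rpos.
  have -> : i = k by lia.
  by rewrite eM subnn expr0 mul1r hM.
have hex : forall i, exists x, (k < i)%N || ((e i < x < e i.+1) && root Q x).
  move=> i; case: (leqP i k) => hik; last by exists 0.
  have hab := E1 i hik.
  have hneg : Q.[e i] * Q.[e i.+1] < 0.
    have h1 := E2 i (leqW hik); have h2 := E2 i.+1 hik.
    rewrite subSS subSn // exprS in h1 h2.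
    set s := (-1) ^+ (k - i) in h1 h2.
    have ss := sgn_sq (k - i).
    rewrite -/s in ss; clearbody s.
    have -> : Q.[e i] * Q.[e i.+1] = - ((-1 * s * Q.[e i]) * (s * Q.[e i.+1])).
      by rewrite -[LHS]mul1r -{1}ss; ring.
    by rewrite oppr_lt0 mulr_gt0.
  have [x hx rx] := poly_ivtoo (ltW hab) hneg.
  exists x; apply/orP; right; rewrite rx andbT.
  by rewrite in_itv /= in hx.
pose t i := xchoose (hex i).
have ht : forall i, (i <= k)%N -> (e i < t i < e i.+1) /\ root Q (t i).
  move=> i hi; have /orP [hk|/andP [h1 h2]] := xchooseP (hex i).
    by rewrite ltnNge hi in hk.
  by split.
exists t; split; last first.
  move=> i hi; have [/andP [_ h1] _] := ht i (ltnW hi).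
  have [/andP [h2 _] _] := ht i.+1 hi.
  by rewrite eS // in h1 h2; split.
split.
- move=> i hi; have [/andP [_ h1] _] := ht i ltac:(lia).
  have [/andP [h2 _] _] := ht i.+1 ltac:(lia).
  exact: lt_trans h1 h2.
- move=> _; have [/andP [h1 _] _] := ht 0%N (leq0n _).
  by rewrite e0 in h1.
- have -> : prodX t k.+1 = \prod_(z <- mkseq t k.+1) ('X - z%:P).
    by rewrite /prodX /mkseq big_map /index_iota subn0.
  apply: all_roots_prod_XsubC.
  + by rewrite sQ size_mkseq.
  + apply/allP => z /mapP [i]; rewrite mem_iota add0n => /andP [_ hi] ->.
    by have [_ ->] := ht i hi.
  + rewrite uniq_rootsE; apply: (sorted_uniq lt_trans ltxx).
    apply/(sortedP 0) => i; rewrite size_mkseq => hi; rewrite !nth_mkseq //; last by lia.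
    have [/andP [_ h1] _] := ht i (ltnW hi).
    have [/andP [h2 _] _] := ht i.+1 hi.
    exact: lt_trans h1 h2.
- move=> i hi /=; rewrite hfac hornerZ mulrCA mulr_gt0 //.
  apply: sign_prod => //.
    move=> j hj.
    have [/andP [h1 _] _] := ht i hi.
    have hi1 : i = i.-1.+1 by lia.
    have h1' : e i = r i.-1 by rewrite {1}hi1 eS //; lia.
    rewrite h1' in h1; apply: le_lt_trans h1; apply: (incr_le hinc); lia.
  move=> j hij hjk.
  have [/andP [_ h1] _] := ht i hi.
  rewrite eS in h1; last by lia.
  apply: lt_le_trans h1 _; exact: incr_le hinc _ _ hij hjk.
Qed.

Lemma Inv_all k : (k <= N)%N -> exists r, Inv k r.
Proof.
elim: k => [|k IH] hk; first by exists (fun _ => 0); exact: Inv0.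
have [r hr] := IH (ltnW hk).
by have [t [ht _]] := step hk hr; exists t.
Qed.

End Real.

Lemma map_D (R : comNzRingType) (f : nat -> int) k :
  map_poly (fun z : int => z%:~R : R) (D f k) = D (fun i => (f i)%:~R) k.
Proof.
suff H : map_poly (fun z : int => z%:~R : R) (D f k) = D (fun i => (f i)%:~R) k /\
  map_poly (fun z : int => z%:~R : R) (D f k.+1) = D (fun i => (f i)%:~R) k.+1 by case: H.
elim: k => [|k [IH1 IH2]].
  split; first by rewrite !D0 rmorph1.
  by rewrite !D1 rmorphM rmorphB /= map_polyX rmorph1 map_polyC.
split => //.
by rewrite !DSS rmorphD !rmorphM rmorphB /= map_polyX rmorph1 map_polyC IH1 IH2.
Qed.

Section Sgn.
Variable R : rcfType.
Fixpoint sgnE (k : nat) : R := if k is k'.+1 then (-1) ^+ k' * sgnE k' else 1.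

Lemma sgnE_neq0 k : sgnE k != 0.
Proof. by elim: k => [|k IH] /=; rewrite ?oner_neq0 // mulf_neq0 // signr_eq0. Qed.

Lemma D_P (b : nat -> R) k : D (fun i => (-1) ^+ i * b i) k = sgnE k *: P b k.
Proof.
suff H : D (fun i => (-1) ^+ i * b i) k = sgnE k *: P b k /\
  D (fun i => (-1) ^+ i * b i) k.+1 = sgnE k.+1 *: P b k.+1 by case: H.
elim: k => [|k [IH1 IH2]].
  split; first by rewrite D0 P0 /= scale1r.
  by rewrite D1 P1 /= expr0 !mul1r scale1r.
split => //.
rewrite DSS PSS IH1 IH2.
have ss := sgn_sq R k.
set s := (-1) ^+ k in ss.
have e2 : sgnE k.+2 = - sgnE k.
  rewrite /= exprS -/s.
  have -> : -1 * s * (s * sgnE k) = - ((s * s) * sgnE k) by ring.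
  by rewrite ss mul1r.
have e1 : sgnE k.+1 = s * sgnE k by [].
have g : (-1) ^+ k.+1 * b k.+1 = - s * b k.+1 by rewrite exprS -/s; ring.
rewrite e2 e1 g -!mul_polyC !polyCM !polyCN.
have SS : s%:P * s%:P = 1 :> {poly R} by rewrite -polyCM ss.
clearbody s.
set S := s%:P in SS *; set B := (b k.+1)%:P; set E := (sgnE k)%:P.
have -> : ('X - 1) * (- S * B) * (S * E * P b k.+1) =
   - (S * S) * (('X - 1) * B * E * P b k.+1) by ring.
rewrite SS; ring.
Qed.
End Sgn.

Lemma D_ext (R : comNzRingType) (f g : nat -> R) k : f =1 g -> D f k = D g k.
Proof.
move=> fg; rewrite /D; congr fst; elim: k => [|k IH] /=; first by rewrite fg.
by rewrite IH fg.
Qed.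

Lemma lc_scale_prod (C : algC) (xs : seq algC) :
  lead_coef (C *: \prod_(z <- xs) ('X - z%:P)) = C.
Proof. by rewrite lead_coefZ (monicP (monic_prod_XsubC _ _ _)) mulr1. Qed.

Lemma final_alg (C C' : algC) (xs ys : seq algC) p q :
  C != 0 -> C' != 0 -> p = C *: \prod_(z <- xs) ('X - z%:P) ->
  q = C' *: \prod_(z <- ys) ('X - z%:P) ->
  all (fun x => x \is Num.real) xs -> all (fun x => x \is Num.real) ys ->
  sorted <=%R xs -> sorted <=%R ys -> uniq (xs ++ ys) -> interlaced_seq xs ys ->
  [/\ only_real_zeros p, only_real_zeros q, no_repeated_zeros (p * q) & interlaced p q].
Proof.
move=> C0 C'0 hp hq rx ry sx sy u il; split.
- move=> z; rewrite hp rootZ // root_prod_XsubC => hz; exact: (allP rx z hz).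
- move=> z; rewrite hq rootZ // root_prod_XsubC => hz; exact: (allP ry z hz).
- move=> z; rewrite hp hq -scalerAl -scalerAr scalerA -big_cat /=.
  have CC : C * C' != 0 by rewrite mulf_neq0.
  rewrite rootZ // root_prod_XsubC => hz.
  by rewrite -mul_polyC mupMr ?rootC // mu_prod_XsubC count_uniq_mem // hz.
- exists xs, ys; split => //.
    by split => //; split => //; rewrite hp lc_scale_prod.
  by split => //; split => //; rewrite hq lc_scale_prod.
Qed.

Lemma map_val_mkseq (u : nat -> algR) m :
  map algRval (mkseq u m) = mkseq (fun i => algRval (u i)) m.
Proof. by rewrite /mkseq -map_comp. Qed.

Lemma sorted_val (u : nat -> algR) m : incr u m ->
  sorted <=%R (map algRval (mkseq u m)).
Proof.
move=> hu; rewrite map_val_mkseq; apply/(sortedP 0) => i; rewrite size_mkseq => hi.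
rewrite !nth_mkseq //; last by lia.
exact: (ltW (hu _ hi)).
Qed.

Lemma real_val (u : nat -> algR) m : all (fun x => x \is Num.real) (map algRval (mkseq u m)).
Proof. by apply/allP => z /mapP [w _ ->]; exact: algRvalP. Qed.

Lemma uniq_mkseq (u : nat -> algR) m : incr u m -> uniq (mkseq u m).
Proof.
move=> hu; apply: (sorted_uniq lt_trans ltxx).
apply/(sortedP 0) => i; rewrite size_mkseq => hi; rewrite !nth_mkseq //; last by lia.
exact: hu.
Qed.

Lemma prodX_seq (u : nat -> algR) m :
  map_poly algRval (prodX u m) = \prod_(z <- map algRval (mkseq u m)) ('X - z%:P).
Proof.
by rewrite /prodX map_prod_XsubC /mkseq !big_map /index_iota subn0.
Qed.

Theorem theorem9p4 (n : nat) (a : seq int) :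
  (2 <= n)%N -> size a = n -> (forall i, (i < n)%N -> 0 < a`_i) ->
  let s := alt_seq a n in
  let s' := alt_seq a n.-1 in
  [/\ only_real_zeros (alexC s),
      only_real_zeros (alexC s'),
      no_repeated_zeros (alexC s * alexC s')
    & interlaced (alexC s) (alexC s')].
Proof.
move=> hn ha hpos s s'.
pose b i := (a`_i)%:~R : algR.
have bpos : forall i, (i < n)%N -> 0 < b i by move=> i hi; rewrite /b ltr0z hpos.
have [r hr] := Inv_all bpos (leq_pred n).
have [t [ht hint]] := step bpos (k := n.-1) ltac:(lia) hr.
have en : n.-1.+1 = n by lia.
rewrite en in ht.
have alexE : forall k, alexC (alt_seq a k) = map_poly algRval (sgnE algR k *: P b k).
  move=> k; rewrite /alexC alex_alt.
  have H : (fun z : int => z%:~R : algC) =1 algRval \o (fun z : int => z%:~R : algR).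
    by move=> z /=; rewrite rmorph_int.
  rewrite (eq_map_poly H) map_poly_comp map_D -D_P; congr (map_poly _ _).
  apply: D_ext => i; rewrite /gsgn /b intrM; congr (_ * _).
  by rewrite rmorphXn rmorphN1.
have [ht1 _ ht3 _] := ht; have [hr1 _ hr3 _] := hr.
have [_ lcn] := P_size_lc bpos (leqnn n).
have [_ lcn1] := P_size_lc bpos (leq_pred n).
apply: (final_alg (C := algRval (sgnE algR n * lead_coef (P b n)))
                  (C' := algRval (sgnE algR n.-1 * lead_coef (P b n.-1)))
                  (xs := map algRval (mkseq t n)) (ys := map algRval (mkseq r n.-1))).
- by rewrite fmorph_eq0 mulf_neq0 ?sgnE_neq0 // gt_eqF.
- by rewrite fmorph_eq0 mulf_neq0 ?sgnE_neq0 // gt_eqF.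
- by rewrite alexE {1}ht3 scalerA map_polyZ prodX_seq.
- by rewrite alexE {1}hr3 scalerA map_polyZ prodX_seq.
- exact: real_val.
- exact: real_val.
- exact: sorted_val.
- exact: sorted_val.
- rewrite -map_cat (map_inj_uniq val_inj) cat_uniq !uniq_mkseq //=.
  rewrite andbT; apply/hasPn => y /mapP [j]; rewrite mem_iota add0n => /andP [_ hj] ->.
  apply/negP => /mapP [i]; rewrite mem_iota add0n => /andP [_ hi] E.
  have [h1 h2] := hint j hj.
  case: (leqP i j) => hij.
    have := incr_le ht1 hij ltac:(lia); rewrite -E => h.
    by move: (le_lt_trans h h1); rewrite ltxx.
  have := incr_le ht1 (_ : j.+1 <= i)%N hi; rewrite -E => h.
  by move: (lt_le_trans h2 (h hij)); rewrite ltxx.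
- rewrite /interlaced_seq !map_val_mkseq !size_mkseq; right; left; split; first lia.
  move=> i hi; have [h1 h2] := hint i hi.
  rewrite !nth_mkseq //; try lia.
  by split; apply: ltW.
Qed.
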